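(* Let $\mathbb{K}$ be a field and let $\mathcal{L}=\{L_1,\ldots,L_d\}$ be a configuration of $d$ mutually distinct lines in $\mathbb{P}^2(\mathbb{K})$, with set of singular points $\{P_1,\ldots,P_s\}$ (points lying on at least two lines of $\mathcal{L}$), where $P_i$ has multiplicity $m_i$ (the number of lines of $\mathcal{L}$ through $P_i$), ordered so that $m_1\ge m_2\ge\cdots\ge m_s$. Then $$m_1+\cdots+m_r\le d+\binom{r}{2}\quad\text{for } r=1,\ldots,s.$$ In particular: (a) if $s\ge 3$ then $m_1+m_2+m_3\le d+3$; (b) if $s\ge 4$ then $m_1+m_2+m_3+m_4\le d+6$. *)

(* Defs.v *)
(* Points and lines of P^2(K) are represented by nonzero
   vectors of K^3 (homogeneous coordinates), considered up to nonzero scaling. *)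
From HB Require Import structures.
From mathcomp Require Import all_boot all_order all_algebra.
Set Implicit Arguments. Unset Strict Implicit. Unset Printing Implicit Defensive.
Import GRing.Theory.
Local Open Scope ring_scope.

Definition proj_eq (K : fieldType) (u v : 'rV[K]_3) : Prop :=
  exists c : K, c != 0 /\ v = c *: u.

Definition incid (K : fieldType) (p l : 'rV[K]_3) : bool :=
  \sum_(i < 3) p 0 i * l 0 i == 0.

Definition mult (K : fieldType) (d : nat) (L : 'I_d -> 'rV[K]_3) (p : 'rV[K]_3) : nat :=
  #|[set i : 'I_d | incid p (L i)]|.

Definition singular (K : fieldType) (d : nat) (L : 'I_d -> 'rV[K]_3) (p : 'rV[K]_3) : Prop :=
  p != 0 /\ (2 <= mult L p)%N.

(* Main.v *)
Require Import Defs.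
From HB Require Import structures.
From mathcomp Require Import all_boot all_order all_algebra zify.
Import GRing.Theory.
Local Open Scope ring_scope.

Lemma incid_mul (K : fieldType) (p l : 'rV[K]_3) :
  incid p l -> p *m l^T = 0.
Proof.
move=> /eqP H; apply/rowP => j; rewrite !mxE (ord1 j).
by rewrite -[RHS]H; apply: eq_bigr => i _; rewrite !mxE.
Qed.

Lemma two_lines (K : fieldType) (l m p q : 'rV[K]_3) :
  l != 0 -> m != 0 -> ~ proj_eq l m -> p != 0 -> q != 0 ->
  incid p l -> incid q l -> incid p m -> incid q m -> proj_eq p q.
Proof.
move=> l0 m0 nlm p0 q0 pl ql pm qm.
have [hl hm] : (l <= col_mx l m)%MS /\ (m <= col_mx l m)%MS.
  by have := submx_refl (col_mx l m); rewrite col_mx_sub => /andP.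
have rk : \rank (col_mx l m) = 2%N.
  apply/eqP; rewrite eqn_leq rank_leq_row /=; rewrite ltnNge; apply/negP => r1.
  have := (mxrank_leqif_eq hl).2; rewrite rank_rV l0.
  have -> : \rank (col_mx l m) = 1%N.
    by apply/eqP; rewrite eqn_leq r1 /=; have := mxrankS hl; rewrite rank_rV l0.
  rewrite eqxx => /esym /andP [_ cl]; have /sub_rVP [c hc] := submx_trans hm cl.
  apply: nlm; exists c; split => //; apply: contraNneq m0 => c0; by rewrite hc c0 scale0r.
have kp : (p <= kermx (col_mx l m)^T)%MS.
  by apply/sub_kermxP; rewrite tr_col_mx mul_mx_row !incid_mul // row_mx0.
have kq : (q <= kermx (col_mx l m)^T)%MS.
  by apply/sub_kermxP; rewrite tr_col_mx mul_mx_row !incid_mul // row_mx0.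
have := (mxrank_leqif_eq kp).2; rewrite rank_rV p0 mxrank_ker mxrank_tr rk /=.
move=> /esym /andP [_ kp'].
have /sub_rVP [c hc] := submx_trans kq kp'.
exists c; split => //; apply: contraNneq q0 => c0; by rewrite hc c0 scale0r.
Qed.
Lemma card_sum (T : finType) (b : pred T) : #|[set i | b i]| = (\sum_i (b i : nat))%N.
Proof.
rewrite -sum1_card big_mkcond /=; apply: eq_bigr => i _; rewrite inE; by case: (b i).
Qed.

Lemma le_bin2 n : (n <= 1 + 'C(n, 2))%N.
Proof.
case: n => [|[|m]] //; rewrite binS bin1; lia.
Qed.

Lemma card_ltr s r : (r <= s)%N -> #|[set k : 'I_s | (k < r)%N]| = r.
Proof.
move=> hr; rewrite -sum1_card (eq_bigl (fun k : 'I_s => (k < r)%N)) => [|k]; last by rewrite inE.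
by rewrite (big_ord_narrow hr) sum1_card card_ord.
Qed.

Theorem lemma2 (K : fieldType) (d : nat) (L : 'I_d -> 'rV[K]_3)
    (s : nat) (P : 'I_s -> 'rV[K]_3) :
  (forall i, L i != 0) ->
  (forall i j, i != j -> ~ proj_eq (L i) (L j)) ->
  (forall k, singular L (P k)) ->
  (forall k l, k != l -> ~ proj_eq (P k) (P l)) ->
  (forall Q, singular L Q -> exists k, proj_eq (P k) Q) ->
  (forall k l : 'I_s, (k <= l)%N -> (mult L (P l) <= mult L (P k))%N) ->
  (forall r, (1 <= r <= s)%N ->
     (\sum_(k < s | (k < r)%N) mult L (P k) <= d + 'C(r, 2))%N)
  /\ ((3 <= s)%N -> (\sum_(k < s | (k < 3)%N) mult L (P k) <= d + 3)%N)
  /\ ((4 <= s)%N -> (\sum_(k < s | (k < 4)%N) mult L (P k) <= d + 6)%N).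
Proof.
move=> Lnz Ldist Psing Pdist _ _.
have main : forall r, (r <= s)%N ->
   (\sum_(k < s | (k < r)%N) mult L (P k) <= d + 'C(r, 2))%N.
  move=> r hr.
  pose S i := [set k : 'I_s | (k < r)%N && incid (P k) (L i)].
  pose D i := [set A : {set 'I_s} | (A \subset S i) && (#|A| == 2)].
  pose R := [set k : 'I_s | (k < r)%N].
  pose DR := [set A : {set 'I_s} | (A \subset R) && (#|A| == 2)].
  have e1 : (\sum_(k < s | (k < r)%N) mult L (P k) = \sum_i #|S i|)%N.
    rewrite /mult (eq_bigr (fun k : 'I_s => \sum_i (incid (P k) (L i) : nat))%N); last first.
      by move=> k _; rewrite card_sum.
    rewrite exchange_big /=; apply: eq_bigr => i _.
    by rewrite card_sum big_mkcond /=; apply: eq_bigr => k _; case: (k < r)%N.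
  have e2 : (\sum_i #|S i| <= \sum_i (1 + #|D i|))%N.
    apply: leq_sum => i _; rewrite /D cards_draws; exact: le_bin2.
  have e3 : (\sum_i #|D i| <= 'C(r, 2))%N.
    rewrite -(@card_ltr s r hr) -/R -cards_draws -/DR.
    under eq_bigr do rewrite card_sum.
    rewrite exchange_big /= card_sum; apply: leq_sum => A _.
    have SR : forall i, S i \subset R.
      by move=> i; apply/subsetP => k; rewrite !inE => /andP[].
    case DRA: (A \in DR).
      case: (pickP (fun i => A \in D i)) => [i Hi | none]; last first.
        by rewrite big1 // => i _; move: (none i); rewrite inE => ->.
      have Hi2 := Hi; rewrite inE in Hi2; rewrite (bigD1 i) //= Hi2 big1; first by move: DRA; rewrite inE => ->.
      move=> j ji.
      apply/eqP; rewrite eqb0; apply/negP => Hj.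
      move: Hi Hj; rewrite /D !inE => /andP[Ai A2] /andP[Aj _].
      case/cards2P: A2 => x [y [xy eA]].
      have xA : x \in A by rewrite eA !inE eqxx.
      have yA : y \in A by rewrite eA !inE eqxx orbT.
      have := subsetP Ai _ xA; have := subsetP Ai _ yA.
      have := subsetP Aj _ xA; have := subsetP Aj _ yA.
      rewrite !inE => /andP[_ yj] /andP[_ xj] /andP[_ yi] /andP[_ xi].
      apply: (Pdist x y xy).
      have ij : i != j by rewrite eq_sym.
      exact: (@two_lines K (L i) (L j) (P x) (P y) (Lnz i) (Lnz j) (Ldist i j ij) (Psing x).1 (Psing y).1 xi yi xj yj).
    rewrite big1 // => i _; apply/eqP; rewrite eqb0; apply/negP => Hi.
    move: DRA; rewrite inE; case/andP: Hi => AS ->.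
    by rewrite (subset_trans AS (SR i)).
  rewrite e1; apply: (leq_trans e2); rewrite big_split /= sum_nat_const card_ord muln1.
  by rewrite leq_add2l.
split; first by move=> r /andP[_ hr]; exact: main.
by split => h; [exact: (main 3%N h) | exact: (main 4%N h)].
Qed.
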